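(* Let $d\in\mathbb{N}$, $0<\lambda<1$, $0\le\epsilon<1$, and let $\mathrm{score}(d',b)$ for $d'\in\{0,\dots,d\}$, $b\in\{0,1\}$ be as defined in the context. Then the global maximizer of $\mathrm{score}$ over $d'\in\{0,\dots,d\}$, $b\in\{0,1\}$ is as follows: (a) if $0\le\epsilon\le\frac{\lambda(\lambda(d-2)+4)}{2(\lambda(d-1)+2)}$, it is $d'=d$, $b=1$; (b) if $\epsilon=\frac{\lambda(d-1)+2}{2d}$, it is $d'=d$, $b=1$; (c) if $\epsilon\ge\frac{\lambda}{2}+\frac32\,\frac{2-\lambda}{\lambda^2(d-1)+3}$, it is $d'=0$, $b=0$.
   Context: Let $\phi(x):=\max(0,x)$, $\epsilon_+:=1-\epsilon$, $\epsilon_-:=\lambda/2-\epsilon$. Define $r_1:=\epsilon_++\frac{\lambda^2}{3}(d-1)\epsilon_-$, $r_2:=\epsilon_-+\frac{\lambda^2}{3}\epsilon_++\frac{\lambda^2}{3}(d-2)\epsilon_-$, $r_3:=\epsilon_++\frac{\lambda}{2}(d-1)\epsilon_-$, $r_4:=\epsilon_-+\frac{\lambda}{2}\epsilon_++\frac{\lambda}{2}(d-2)\epsilon_-$, $r_5:=\frac{\lambda}{2}\epsilon_++\frac{\lambda}{2}\epsilon_-+\frac{\lambda^2}{4}(d-2)\epsilon_-$, $r_6:=\lambda\epsilon_-+\frac{\lambda^2}{4}\epsilon_++\frac{\lambda^2}{4}(d-3)\epsilon_-$, $r_7:=\epsilon_++(d-1)\epsilon_-$. For $d'\in\{0,\dots,d\}$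 and $b\in\{0,1\}$ define $s_1:=br_7+r_3+(d'-1)r_4$, $s_2:=br_7+d'r_4$, $s_3:=br_3+r_1+(d'-1)r_5$, $s_4:=br_3+d'r_5$, $s_5:=br_4+r_2+r_5+(d'-2)r_6$, $s_6:=br_4+r_2+(d'-1)r_6$, $s_7:=br_4+r_5+(d'-1)r_6$, $s_8:=br_4+d'r_6$ (each a function of $(d',b)$), and $$\mathrm{score}(d',b):=d'\phi(s_1)+(d-d')\phi(s_2)+d'\phi(s_3)+(d-d')\phi(s_4)+d'(d'-1)\phi(s_5)+d'(d-d')\phi(s_6)+d'(d-d')\phi(s_7)+(d-d')(d-d'-1)\phi(s_8).$$ *)

(* Defs.v *)
From mathcomp Require Import all_boot all_order all_algebra.
Set Implicit Arguments. Unset Strict Implicit. Unset Printing Implicit Defensive.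
Import Order.TTheory GRing.Theory Num.Theory.
Local Open Scope ring_scope.

Definition phi (R : realFieldType) (x : R) : R := Num.max 0 x.

(* score(d', b) for parameters lambda, epsilon, d; all arithmetic in R
   (in particular d-1, d-2, d-3, d'-1, d'-2, d-d' are real differences). *)
Definition score (R : realFieldType) (lam eps : R) (d d' : nat) (b : bool) : R :=
  let dR := d%:R in
  let dp := d'%:R in
  let bR : R := (b : nat)%:R in
  let ep := 1 - eps in
  let em := lam / 2 - eps in
  let r1 := ep + lam ^+ 2 / 3 * (dR - 1) * em in
  let r2 := em + lam ^+ 2 / 3 * ep + lam ^+ 2 / 3 * (dR - 2) * em in
  let r3 := ep + lam / 2 * (dR - 1) * em in
  let r4 := em + lam / 2 * ep + lam / 2 * (dR - 2) * em in
  let r5 := lam / 2 * ep + lam / 2 * em + lam ^+ 2 / 4 * (dR - 2) * em in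
  let r6 := lam * em + lam ^+ 2 / 4 * ep + lam ^+ 2 / 4 * (dR - 3) * em in
  let r7 := ep + (dR - 1) * em in
  let s1 := bR * r7 + r3 + (dp - 1) * r4 in
  let s2 := bR * r7 + dp * r4 in
  let s3 := bR * r3 + r1 + (dp - 1) * r5 in
  let s4 := bR * r3 + dp * r5 in
  let s5 := bR * r4 + r2 + r5 + (dp - 2) * r6 in
  let s6 := bR * r4 + r2 + (dp - 1) * r6 in
  let s7 := bR * r4 + r5 + (dp - 1) * r6 in
  let s8 := bR * r4 + dp * r6 in
  dp * phi s1 + (dR - dp) * phi s2 + dp * phi s3 + (dR - dp) * phi s4
  + dp * (dp - 1) * phi s5 + dp * (dR - dp) * phi s6 + dp * (dR - dp) * phi s7
  + (dR - dp) * (dR - dp - 1) * phi s8.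

Definition is_global_maximizer (R : realFieldType) (lam eps : R) (d d0 : nat)
  (b0 : bool) : Prop :=
  (d0 <= d)%N /\
  forall (d' : nat) (b : bool), (d' <= d)%N -> score lam eps d d' b <= score lam eps d d0 b0.

(* Main.v *)
Require Import Defs.
From mathcomp Require Import all_boot all_order all_algebra.
From mathcomp Require Import ring lra.
Import Order.TTheory GRing.Theory Num.Theory.
Local Open Scope ring_scope.

Section S.
Variable R : realFieldType.

Implicit Types (x y : R).

Lemma phi_ge0 x : 0 <= phi x.
Proof. by rewrite /phi le_max lexx. Qed.
Lemma phi_ge x : x <= phi x.
Proof. by rewrite /phi le_max lexx orbT. Qed.
Lemma phi_id x : 0 <= x -> phi x = x.
Proof. by move=> h; rewrite /phi max_r. Qed.
Lemma phi_0 x : x <= 0 -> phi x = 0.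
Proof. by move=> h; rewrite /phi max_l. Qed.
Lemma phi_le x y : x <= y -> phi x <= phi y.
Proof.
move=> h; rewrite /phi ge_max le_max lexx /= le_max.
by rewrite h orbT.
Qed.
Lemma phi_cases x : (0 <= x /\ phi x = x) \/ (x <= 0 /\ phi x = 0).
Proof.
case: (lerP 0 x) => h; first by left; split => //; exact: phi_id.
by right; split; [exact: ltW | apply: phi_0; exact: ltW].
Qed.

Definition sc (dR dp bR r1 r2 r3 r4 r5 r6 r7 : R) : R :=
  let s1 := bR * r7 + r3 + (dp - 1) * r4 in
  let s2 := bR * r7 + dp * r4 in
  let s3 := bR * r3 + r1 + (dp - 1) * r5 in
  let s4 := bR * r3 + dp * r5 in
  let s5 := bR * r4 + r2 + r5 + (dp - 2) * r6 in
  let s6 := bR * r4 + r2 + (dp - 1) * r6 in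
  let s7 := bR * r4 + r5 + (dp - 1) * r6 in
  let s8 := bR * r4 + dp * r6 in
  dp * phi s1 + (dR - dp) * phi s2 + dp * phi s3 + (dR - dp) * phi s4
  + dp * (dp - 1) * phi s5 + dp * (dR - dp) * phi s6 + dp * (dR - dp) * phi s7
  + (dR - dp) * (dR - dp - 1) * phi s8.

Definition rr1 l e dR : R := (1 - e) + l ^+ 2 / 3 * (dR - 1) * (l / 2 - e).
Definition rr2 l e dR : R := (l / 2 - e) + l ^+ 2 / 3 * (1 - e) + l ^+ 2 / 3 * (dR - 2) * (l / 2 - e).
Definition rr3 l e dR : R := (1 - e) + l / 2 * (dR - 1) * (l / 2 - e).
Definition rr4 l e dR : R := (l / 2 - e) + l / 2 * (1 - e) + l / 2 * (dR - 2) * (l / 2 - e).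
Definition rr5 l e dR : R := l / 2 * (1 - e) + l / 2 * (l / 2 - e) + l ^+ 2 / 4 * (dR - 2) * (l / 2 - e).
Definition rr6 l e dR : R := l * (l / 2 - e) + l ^+ 2 / 4 * (1 - e) + l ^+ 2 / 4 * (dR - 3) * (l / 2 - e).
Definition rr7 l e dR : R := (1 - e) + (dR - 1) * (l / 2 - e).

Lemma score_sc l e d dp b : score l e d dp b =
  sc d%:R dp%:R (b:nat)%:R (rr1 l e d%:R) (rr2 l e d%:R) (rr3 l e d%:R)
     (rr4 l e d%:R) (rr5 l e d%:R) (rr6 l e d%:R) (rr7 l e d%:R).
Proof. by []. Qed.



Lemma wphi0 (w s : R) : 0 <= w -> (w = 0 \/ s <= 0) -> w * phi s <= 0.
Proof.
move=> hw [->|hs]; first by rewrite mul0r.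
by rewrite phi_0 // mulr0.
Qed.

Lemma sc_c (dR x b r1 r2 r3 r4 r5 r6 r7 : R) :
  0 <= x -> x <= dR -> (x = 0 \/ x = 1 \/ 2 <= x) ->
  (dR - x = 0 \/ dR - x = 1 \/ 2 <= dR - x) -> 0 <= b -> b <= 1 ->
  r1 <= 0 -> r2 <= 0 -> r3 <= 0 -> r4 <= 0 -> r5 <= 0 -> r6 <= 0 -> r7 <= 0 ->
  sc dR x b r1 r2 r3 r4 r5 r6 r7 <= 0.
Proof.
move=> hx0 hxd hx ht hb0 hb1 h1 h2 h3 h4 h5 h6 h7.
rewrite /sc.
have ht0 : 0 <= dR - x by lra.
have hxx : 0 <= x * (x - 1) by case: hx => [->|[->|?]]; nra.
have htt : 0 <= (dR - x) * (dR - x - 1) by case: ht => [->|[->|?]]; nra.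
have hxt : 0 <= x * (dR - x) by nra.
have nb7 : b * r7 <= 0 by nra.
have nb3 : b * r3 <= 0 by nra.
have nb4 : b * r4 <= 0 by nra.
have X1 : x = 0 \/ 0 <= x - 1 by case: hx => [->|[->|?]]; [left|right|right]; lra.
have X2 : x * (x - 1) = 0 \/ 0 <= x - 2 by case: hx => [->|[->|?]]; [left|left|right]; lra.
have T1 : x * phi (b * r7 + r3 + (x - 1) * r4) <= 0.
  apply: wphi0 => //; case: X1 => [->|h]; [by left | right]; nra.
have T2 : (dR - x) * phi (b * r7 + x * r4) <= 0.
  apply: wphi0 => //; right; nra.
have T3 : x * phi (b * r3 + r1 + (x - 1) * r5) <= 0.
  apply: wphi0 => //; case: X1 => [->|h]; [by left | right]; nra.
have T4 : (dR - x) * phi (b * r3 + x * r5) <= 0.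
  apply: wphi0 => //; right; nra.
have T5 : x * (x - 1) * phi (b * r4 + r2 + r5 + (x - 2) * r6) <= 0.
  apply: wphi0 => //; case: X2 => [->|h]; [by left | right]; nra.
have T6 : x * (dR - x) * phi (b * r4 + r2 + (x - 1) * r6) <= 0.
  apply: wphi0 => //; case: X1 => [->|h]; [by left; rewrite mul0r | right]; nra.
have T7 : x * (dR - x) * phi (b * r4 + r5 + (x - 1) * r6) <= 0.
  apply: wphi0 => //; case: X1 => [->|h]; [by left; rewrite mul0r | right]; nra.
have T8 : (dR - x) * (dR - x - 1) * phi (b * r4 + x * r6) <= 0.
  apply: wphi0 => //; right; nra.
lra.
Qed.


Lemma sc_b (dR x b l u c k : R) :
  c = 1 - l / 2 -> k = 1 - l ^+ 2 / 3 ->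
  0 < l -> l < 1 -> 0 < u -> 2 <= dR ->
  0 <= x -> x <= dR -> (x = 0 \/ 1 <= x) ->
  (dR - x = 0 \/ dR - x = 1 \/ 2 <= dR - x) -> 0 <= b -> b <= 1 ->
  sc dR x b ((dR - 1) * u * k) (- (u * k)) ((dR - 1) * u * c) (- (u * c))
     (u * (dR - 2) * l * c / 2) (- (l * u * c)) 0
  <= sc dR dR 1 ((dR - 1) * u * k) (- (u * k)) ((dR - 1) * u * c) (- (u * c))
     (u * (dR - 2) * l * c / 2) (- (l * u * c)) 0.
Proof.
move=> ec ek hl0 hl1 hu hd hx0 hxd hx ht hb0 hb1.
have hc : 0 < c by rewrite ec; lra.
have hck : c <= k by rewrite ek ec; nra.
have hk : 0 < k by lra.
have hlc : l * c <= k by rewrite ek ec; nra.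
set t := dR - x in ht *.
have ht0 : 0 <= t by rewrite /t; lra.
have hxt : 0 <= x * t by nra.
have hxx : 0 <= x * (x - 1) by case: hx => [h|h]; rewrite ?h; nra.
have htt : 0 <= t * (t - 1) by case: ht => [h|[h|h]]; rewrite ?h; nra.
set r1 := (dR - 1) * u * k. set r2 := - (u * k). set r3 := (dR - 1) * u * c.
set r4 := - (u * c). set r5 := u * (dR - 2) * l * c / 2. set r6 := - (l * u * c).
set S7 := u * l * c * (dR - 2 * x) / 2.
have LB : dR * (r3 + r1 + (dR - 1) * r5) <= sc dR dR 1 r1 r2 r3 r4 r5 r6 0.
  rewrite /sc subrr !mul0r !mulr0 !addr0 !mul1r !add0r.
  have := phi_ge (r3 + r1 + (dR - 1) * r5).
  have := phi_ge0 (r4 + r2 + r5 + (dR - 2) * r6).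
  have := phi_ge0 (r3 + (dR - 1) * r4).
  move=> p1 p2 p3.
  have h1 : 0 <= dR * phi (r3 + (dR - 1) * r4) by apply: mulr_ge0 => //; lra.
  have h2 : 0 <= dR * (dR - 1) * phi (r4 + r2 + r5 + (dR - 2) * r6).
    by apply: mulr_ge0 => //; nra.
  have h3 : dR * (r3 + r1 + (dR - 1) * r5) <= dR * phi (r3 + r1 + (dR - 1) * r5).
    by apply: ler_wpM2l => //; lra.
  lra.
apply: (le_trans _ LB); rewrite /sc -/t /=.
have huc : 0 <= u * c by apply: mulr_ge0; lra.
have T1 : x * phi (b * 0 + r3 + (x - 1) * r4) <= x * (u * c * t).
  have -> : b * 0 + r3 + (x - 1) * r4 = u * c * t by rewrite /r3 /r4 /t; field.
  by rewrite phi_id //; apply: mulr_ge0.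
have T2 : t * phi (b * 0 + x * r4) <= 0.
  have -> : b * 0 + x * r4 = - (x * (u * c)) by rewrite /r4; field.
  rewrite phi_0 ?mulr0 // oppr_le0; exact: mulr_ge0.
have hr5 : 0 <= r5.
  rewrite /r5; apply: divr_ge0; last by lra.
  apply: mulr_ge0; last lra; apply: mulr_ge0; last lra; apply: mulr_ge0; lra.
have hr3 : 0 <= r3 by rewrite /r3; apply: mulr_ge0; [apply: mulr_ge0|]; lra.
have hr1 : 0 <= r1 by rewrite /r1; apply: mulr_ge0; [apply: mulr_ge0|]; lra.
have T3 : x * phi (b * r3 + r1 + (x - 1) * r5) <= x * (r3 + r1 + (x - 1) * r5).
  case: hx => [->|hx1]; first by rewrite !mul0r.
  have hx5 : 0 <= (x - 1) * r5 by apply: mulr_ge0; lra.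
  apply: ler_wpM2l => //; rewrite -[X in _ <= X]phi_id; last by lra.
  apply: phi_le; nra.
have T4 : t * phi (b * r3 + x * r5) <= t * (r3 + x * r5).
  have hx5 : 0 <= x * r5 by apply: mulr_ge0; lra.
  apply: ler_wpM2l => //; rewrite -[X in _ <= X]phi_id; last by lra.
  apply: phi_le; nra.
have hul : 0 <= u * l * c by apply: mulr_ge0; [apply: mulr_ge0|]; lra.
have T5 : x * (x - 1) * phi (b * r4 + r2 + r5 + (x - 2) * r6) <= x * (x - 1) * phi S7.
  apply: ler_wpM2l => //; apply: phi_le.
  have -> : b * r4 + r2 + r5 + (x - 2) * r6 = S7 - b * (u * c) + u * (l * c - k).
    by rewrite /r4 /r2 /r5 /r6 /S7; field.
  have : 0 <= b * (u * c) by apply: mulr_ge0.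
  have : u * (l * c - k) <= 0 by rewrite mulr_ge0_le0 //; lra.
  lra.
have T6 : x * t * phi (b * r4 + r2 + (x - 1) * r6) <= 0.
  have -> : b * r4 + r2 + (x - 1) * r6 = - (b * (u * c)) + u * (l * c - k) - x * (u * l * c).
    by rewrite /r4 /r2 /r6; field.
  have : 0 <= b * (u * c) by apply: mulr_ge0.
  have : u * (l * c - k) <= 0 by rewrite mulr_ge0_le0 //; lra.
  have : 0 <= x * (u * l * c) by apply: mulr_ge0.
  move=> *; rewrite phi_0 ?mulr0 //; lra.
have T7 : x * t * phi (b * r4 + r5 + (x - 1) * r6) <= x * t * phi S7.
  apply: ler_wpM2l => //; apply: phi_le.
  have -> : b * r4 + r5 + (x - 1) * r6 = S7 - b * (u * c) by rewrite /r4 /r5 /r6 /S7; field.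
  have : 0 <= b * (u * c) by apply: mulr_ge0.
  lra.
have T8 : t * (t - 1) * phi (b * r4 + x * r6) <= 0.
  have -> : b * r4 + x * r6 = - (b * (u * c)) - x * (u * l * c) by rewrite /r4 /r6; field.
  have : 0 <= b * (u * c) by apply: mulr_ge0.
  have : 0 <= x * (u * l * c) by apply: mulr_ge0.
  move=> *; rewrite phi_0 ?mulr0 //; lra.
have Part1 : x * (u * c * t) <= t * (dR - 1) * u * k.
  have hx' : t = 0 \/ x <= dR - 1 by case: ht => [h|[h|h]]; [left|right|right]; rewrite /t in h *; lra.
  case: hx' => [h0|h1].
    by rewrite h0 !(mulr0, mul0r).
  have : 0 <= t * u * ((dR - 1) * (k - c) + (dR - 1 - x) * c).
    apply: mulr_ge0; first by apply: mulr_ge0; lra.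
    have : 0 <= (dR - 1) * (k - c) by apply: mulr_ge0; lra.
    have : 0 <= (dR - 1 - x) * c by apply: mulr_ge0; lra.
    lra.
  have -> : t * u * ((dR - 1) * (k - c) + (dR - 1 - x) * c) = t * (dR - 1) * u * k - x * (u * c * t) by ring.
  lra.
have Part2 : (x * (x - 1) + x * t) * phi S7 <= t * (dR - 1) * u * (dR - 2) * l * c / 2.
  have e1 : x * (x - 1) + x * t = x * (dR - 1) by rewrite /t; field.
  rewrite e1.
  have hq : 0 <= t * (t - 2) + x ^+ 2.
    case: ht => [->|[h|h]]; try nra.
    case: hx => [h'|h']; [| nra]. rewrite /t h' in h; lra.
  have Rp : 0 <= t * (dR - 1) * u * (dR - 2) * l * c / 2.
    apply: divr_ge0; last lra.
    by repeat apply: mulr_ge0; lra.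
  case: (phi_cases S7) => [[_ ->]|[_ ->]]; last by rewrite mulr0.
  have e2 : t * (dR - 1) * u * (dR - 2) * l * c / 2 - x * (dR - 1) * S7
     = (dR - 1) * (u * l * c / 2) * (t * (t - 2) + x ^+ 2).
    by rewrite /S7 /t; field.
  have : 0 <= (dR - 1) * (u * l * c / 2) * (t * (t - 2) + x ^+ 2).
    have h2 : 0 <= u * l * c / 2 by apply: divr_ge0 => //; lra.
    by apply: mulr_ge0 => //; apply: mulr_ge0 => //; lra.
  lra.
have E : dR * (r3 + r1 + (dR - 1) * r5) - x * (r3 + r1 + (x - 1) * r5) - t * (r3 + x * r5)
   = t * (dR - 1) * u * k + t * (dR - 1) * u * (dR - 2) * l * c / 2.
  by rewrite /t /r1 /r3 /r5; field.
have P7 := phi_ge0 S7.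
have E2 : x * (x - 1) * phi S7 + x * t * phi S7 = (x * (x - 1) + x * t) * phi S7 by ring.
lra.
Qed.


Lemma sc_a (dR x b r1 r2 r3 r4 r5 r6 r7 : R) :
  1 <= dR -> 0 <= x -> x <= dR -> (x = 0 \/ x = 1 \/ 2 <= x) ->
  (dR - x = 0 \/ dR - x = 1 \/ 2 <= dR - x) -> 0 <= b -> b <= 1 ->
  0 <= r4 -> 0 <= r7 -> 0 <= r3 -> r4 <= r3 -> 0 <= r5 -> r5 <= r1 -> r6 <= r5 ->
  0 <= r4 + r2 + r5 + (dR - 2) * r6 ->
  0 <= (dR - 1) * (r4 + r2 + r5 + (dR - 2) * r6 + r6) + r1 + r3 ->
  0 <= (dR - 1) * (r4 + r2 + r5 + (dR - 2) * r6 + dR * r6 + r4 + r5) + r1 + r3 ->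
  0 <= r4 + r5 + r2 - r6 ->
  sc dR x b r1 r2 r3 r4 r5 r6 r7 <= sc dR dR 1 r1 r2 r3 r4 r5 r6 r7.
Proof.
move=> hd hx0 hxd hx ht hb0 hb1 h4 h7 h3 h34 h5 h15 h56 hT hK1 hK2 hK3.
set T := r4 + r2 + r5 + (dR - 2) * r6 in hT hK1 hK2.
set t := dR - x in ht *.
have ht0 : 0 <= t by rewrite /t; lra.
have hxt : 0 <= x * t by apply: mulr_ge0.
have hxx : 0 <= x * (x - 1) by case: hx => [h|[h|h]]; rewrite ?h; nra.
have htt : 0 <= t * (t - 1) by case: ht => [h|[h|h]]; rewrite ?h; nra.
have hd1 : 0 <= dR - 1 by lra.
set s1 := r7 + r3 + (dR - 1) * r4.
set s3 := r3 + r1 + (dR - 1) * r5.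
have LB : dR * s1 + dR * s3 + dR * (dR - 1) * T <= sc dR dR 1 r1 r2 r3 r4 r5 r6 r7.
  rewrite /sc subrr !(mul0r, mulr0, addr0, mul1r).
  have l1 : dR * s1 <= dR * phi (r7 + r3 + (dR - 1) * r4) by apply: ler_wpM2l; [lra|apply: phi_ge].
  have l2 : dR * s3 <= dR * phi (r3 + r1 + (dR - 1) * r5) by apply: ler_wpM2l; [lra|apply: phi_ge].
  have l3 : dR * (dR - 1) * T <= dR * (dR - 1) * phi (r4 + r2 + r5 + (dR - 2) * r6).
    by apply: ler_wpM2l; [apply: mulr_ge0; lra|apply: phi_ge].
  rewrite /T in l3 *. lra.
apply: (le_trans _ LB); rewrite /sc -/t /=.
have hxr4 : 0 <= x * r4 by apply: mulr_ge0.
have hxr5 : 0 <= x * r5 by apply: mulr_ge0.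
have hbr7 : b * r7 <= r7 by rewrite -[X in _ <= X]mul1r; apply: ler_wpM2r.
have hbr3 : b * r3 <= r3 by rewrite -[X in _ <= X]mul1r; apply: ler_wpM2r.
have hbr4 : b * r4 <= r4 by rewrite -[X in _ <= X]mul1r; apply: ler_wpM2r.
have T1 : x * phi (b * r7 + r3 + (x - 1) * r4) <= x * (r7 + r3 + (x - 1) * r4).
  apply: ler_wpM2l => //; rewrite -[X in _ <= X]phi_id; last by nra.
  apply: phi_le; lra.
have T2 : t * phi (b * r7 + x * r4) <= t * (r7 + x * r4).
  apply: ler_wpM2l => //; rewrite -[X in _ <= X]phi_id; last by nra.
  apply: phi_le; lra.
have T3 : x * phi (b * r3 + r1 + (x - 1) * r5) <= x * (r3 + r1 + (x - 1) * r5).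
  apply: ler_wpM2l => //; rewrite -[X in _ <= X]phi_id; last by nra.
  apply: phi_le; lra.
have T4 : t * phi (b * r3 + x * r5) <= t * (r3 + x * r5).
  apply: ler_wpM2l => //; rewrite -[X in _ <= X]phi_id; last by nra.
  apply: phi_le; lra.
set S5 := r4 + r2 + r5 + (x - 2) * r6.
set S7 := r4 + r5 + (x - 1) * r6.
have T5 : x * (x - 1) * phi (b * r4 + r2 + r5 + (x - 2) * r6) <= x * (x - 1) * phi S5.
  by apply: ler_wpM2l => //; apply: phi_le; rewrite /S5; lra.
have T6 : x * t * phi (b * r4 + r2 + (x - 1) * r6) <= x * t * phi S5.
  apply: ler_wpM2l => //; apply: phi_le; rewrite /S5.
  have -> : r4 + r2 + r5 + (x - 2) * r6 = r4 + r2 + (x - 1) * r6 + (r5 - r6) by ring.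
  lra.
have T7 : x * t * phi (b * r4 + r5 + (x - 1) * r6) <= x * t * phi S7.
  by apply: ler_wpM2l => //; apply: phi_le; rewrite /S7; lra.
have T8 : t * (t - 1) * phi (b * r4 + x * r6) <= t * (t - 1) * phi S7.
  apply: ler_wpM2l => //; apply: phi_le; rewrite /S7.
  have -> : r4 + r5 + (x - 1) * r6 = r4 + x * r6 + (r5 - r6) by ring.
  lra.
have EA : dR * s1 - x * (r7 + r3 + (x - 1) * r4) - t * (r7 + x * r4) = t * (r3 + (dR - 1) * r4).
  by rewrite /s1 /t; ring.
have EB : dR * s3 - x * (r3 + r1 + (x - 1) * r5) - t * (r3 + x * r5) = t * (r1 + (dR - 1) * r5).
  by rewrite /s3 /t; ring.
have E5 : x * (x - 1) * phi S5 + x * t * phi S5 = x * (dR - 1) * phi S5 by rewrite /t; ring.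
have E7 : x * t * phi S7 + t * (t - 1) * phi S7 = t * (dR - 1) * phi S7 by rewrite /t; ring.
set K := (dR - 1) * (r4 + r5) + r1 + r3.
have hK : 0 <= K.
  rewrite /K; have : 0 <= (dR - 1) * (r4 + r5) by apply: mulr_ge0; lra.
  lra.
have MAIN : x * (dR - 1) * phi S5 + t * (dR - 1) * phi S7 <= dR * (dR - 1) * T + t * K.
  have hdT : 0 <= dR * (dR - 1) * T by apply: mulr_ge0 => //; apply: mulr_ge0; lra.
  have htK : 0 <= t * K by apply: mulr_ge0.
  case: (phi_cases S5) => [[hS5 ->]|[hS5 ->]]; case: (phi_cases S7) => [[hS7 ->]|[hS7 ->]].
  - have E : dR * (dR - 1) * T + t * K - (x * (dR - 1) * S5 + t * (dR - 1) * S7)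
       = t * ((dR - 1) * (T + r6) + r1 + r3).
      by rewrite /T /K /S5 /S7 /t; ring.
    have : 0 <= t * ((dR - 1) * (T + r6) + r1 + r3) by apply: mulr_ge0.
    lra.
  - have E : dR * (dR - 1) * T + t * K - (x * (dR - 1) * S5 + t * (dR - 1) * 0)
       = t * (K + (dR - 1) * (T + x * r6)).
      by rewrite /T /K /S5 /t; ring.
    have E2 : dR * (K + (dR - 1) * (T + x * r6)) = t * (K + (dR - 1) * T)
       + x * ((dR - 1) * (T + dR * r6 + r4 + r5) + r1 + r3).
      by rewrite /K /t; ring.
    have Q : 0 <= dR * (K + (dR - 1) * (T + x * r6)).
      rewrite E2; apply: addr_ge0; apply: mulr_ge0 => //.
      by apply: addr_ge0 => //; apply: mulr_ge0.
    have dpos : 0 < dR by lra.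
    rewrite pmulr_rge0 // in Q.
    have : 0 <= t * (K + (dR - 1) * (T + x * r6)) by apply: mulr_ge0.
    lra.
  - have E : dR * (dR - 1) * T + t * K - (x * (dR - 1) * 0 + t * (dR - 1) * S7)
       = dR * (dR - 1) * T - t * (dR - 1) * S5 + t * ((dR - 1) * (r4 + r5 + r2 - r6) + r1 + r3).
      by rewrite /T /K /S5 /S7 /t; ring.
    have : 0 <= t * ((dR - 1) * (r4 + r5 + r2 - r6) + r1 + r3).
      apply: mulr_ge0 => //.
      have : 0 <= (dR - 1) * (r4 + r5 + r2 - r6) by apply: mulr_ge0.
      lra.
    have : t * (dR - 1) * S5 <= 0.
      by rewrite mulr_ge0_le0 //; apply: mulr_ge0.
    lra.
  - rewrite !mulr0 addr0. lra.
have EK : t * K = t * (r3 + (dR - 1) * r4) + t * (r1 + (dR - 1) * r5) by rewrite /K; ring.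
apply: le_trans (_ : _ <= x * (r7 + r3 + (x - 1) * r4) + t * (r7 + x * r4)
   + x * (r3 + r1 + (x - 1) * r5) + t * (r3 + x * r5) + x * (x - 1) * phi S5
   + x * t * phi S5 + x * t * phi S7 + t * (t - 1) * phi S7) _.
  by repeat apply: lerD.
move: MAIN EA EB E5 E7 EK.
move: (x * (r7 + r3 + (x - 1) * r4)) (t * (r7 + x * r4)) (x * (r3 + r1 + (x - 1) * r5))
  (t * (r3 + x * r5)) (x * (x - 1) * phi S5) (x * t * phi S5) (x * t * phi S7)
  (t * (t - 1) * phi S7) (x * (dR - 1) * phi S5) (t * (dR - 1) * phi S7) (t * K)
  (dR * s1) (dR * s3) (dR * (dR - 1) * T) (t * (r3 + (dR - 1) * r4)) (t * (r1 + (dR - 1) * r5)).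
clear. move=> *. lra.
Qed.


Lemma key (r40 r4 e g g0 G : R) : 0 < r40 -> 0 <= r4 -> 0 <= e -> 0 <= g0 -> 0 <= G ->
  r40 * g = r4 * g0 + e * G -> 0 <= g.
Proof.
move=> p h1 h2 h3 h4 E.
have : 0 <= r40 * g by rewrite E; apply: addr_ge0; apply: mulr_ge0.
by rewrite pmulr_rge0.
Qed.

Lemma facts_a (l e dR : R) : 0 < l -> l < 1 -> 0 <= e -> 1 <= dR ->
  0 <= rr4 l e dR ->
  0 <= rr7 l e dR /\ 0 <= rr3 l e dR /\ 0 <= rr3 l e dR - rr4 l e dR /\
      0 <= rr5 l e dR /\ 0 <= rr1 l e dR - rr5 l e dR /\ 0 <= rr5 l e dR - rr6 l e dR /\
      0 <= (rr4 l e dR + rr2 l e dR + rr5 l e dR + (dR - 2) * rr6 l e dR) /\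
      0 <= (dR - 1) * ((rr4 l e dR + rr2 l e dR + rr5 l e dR + (dR - 2) * rr6 l e dR) + rr6 l e dR) + rr1 l e dR + rr3 l e dR /\
      0 <= (dR - 1) * ((rr4 l e dR + rr2 l e dR + rr5 l e dR + (dR - 2) * rr6 l e dR) + dR * rr6 l e dR + rr4 l e dR + rr5 l e dR) + rr1 l e dR + rr3 l e dR /\
      0 <= rr4 l e dR + rr5 l e dR + rr2 l e dR - rr6 l e dR.
Proof.
move=> hl0 hl1 e0p hd r4p.
have hD : 0 <= dR - 1 by lra.
pose r40 := l - l ^+ 2 / 4 + l ^+ 2 * (dR - 1) / 4.
have r40p : 0 < r40.
  rewrite /r40; have : 0 <= l ^+ 2 * (dR - 1) / 4 by apply: divr_ge0 => //; apply: mulr_ge0 => //; nra.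
  nra.
have Fr7 : 0 <= rr7 l e dR.
  apply: (@key _ (rr4 l e dR) e _ ((1) + (dR - 1) * ((1 / 2) * l)) ((1 - 1 * l + (1 / 4) * l ^+ 2)) r40p r4p e0p).
  - have a0 : (0:R) <= (1) by nra.
    have a1 : (0:R) <= ((1 / 2) * l) by nra.
    have a1' : (0:R) <= (dR - 1) * ((1 / 2) * l) by apply: mulr_ge0 => //; try apply: exprn_ge0.
    lra.
  - have b0 : (0:R) <= (1 - 1 * l + (1 / 4) * l ^+ 2) by nra.
    lra.
  - rewrite /r40 /rr1 /rr2 /rr3 /rr4 /rr5 /rr6 /rr7; by field.
have Fr3 : 0 <= rr3 l e dR.
  apply: (@key _ (rr4 l e dR) e _ ((1) + (dR - 1) * ((1 / 4) * l ^+ 2)) ((1 - 1 * l + (1 / 4) * l ^+ 2) + (dR - 1) * ((1 / 2) * l - (1 / 2) * l ^+ 2 + (1 / 8) * l ^+ 3)) r40p r4p e0p).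
  - have a0 : (0:R) <= (1) by nra.
    have a1 : (0:R) <= ((1 / 4) * l ^+ 2) by nra.
    have a1' : (0:R) <= (dR - 1) * ((1 / 4) * l ^+ 2) by apply: mulr_ge0 => //; try apply: exprn_ge0.
    lra.
  - have b0 : (0:R) <= (1 - 1 * l + (1 / 4) * l ^+ 2) by nra.
    have b1 : (0:R) <= ((1 / 2) * l - (1 / 2) * l ^+ 2 + (1 / 8) * l ^+ 3) by nra.
    have b1' : (0:R) <= (dR - 1) * ((1 / 2) * l - (1 / 2) * l ^+ 2 + (1 / 8) * l ^+ 3) by apply: mulr_ge0 => //; try apply: exprn_ge0.
    lra.
  - rewrite /r40 /rr1 /rr2 /rr3 /rr4 /rr5 /rr6 /rr7; by field.
have Fr34 : 0 <= rr3 l e dR - rr4 l e dR.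
  apply: (@key _ (rr4 l e dR) e _ ((1 - 1 * l + (1 / 4) * l ^+ 2)) ((1 - 1 * l + (1 / 4) * l ^+ 2) + (dR - 1) * ((1 / 2) * l - (1 / 2) * l ^+ 2 + (1 / 8) * l ^+ 3)) r40p r4p e0p).
  - have a0 : (0:R) <= (1 - 1 * l + (1 / 4) * l ^+ 2) by nra.
    lra.
  - have b0 : (0:R) <= (1 - 1 * l + (1 / 4) * l ^+ 2) by nra.
    have b1 : (0:R) <= ((1 / 2) * l - (1 / 2) * l ^+ 2 + (1 / 8) * l ^+ 3) by nra.
    have b1' : (0:R) <= (dR - 1) * ((1 / 2) * l - (1 / 2) * l ^+ 2 + (1 / 8) * l ^+ 3) by apply: mulr_ge0 => //; try apply: exprn_ge0.
    lra.
  - rewrite /r40 /rr1 /rr2 /rr3 /rr4 /rr5 /rr6 /rr7; by field.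
have Fr5 : 0 <= rr5 l e dR.
  apply: (@key _ (rr4 l e dR) e _ (((1 / 2) * l + (1 / 4) * l ^+ 2 - (1 / 8) * l ^+ 3) + (dR - 1) * ((1 / 8) * l ^+ 3)) (((1 / 2) * l - (3 / 4) * l ^+ 2 + (3 / 8) * l ^+ 3 - (1 / 16) * l ^+ 4) + (dR - 1) * ((1 / 4) * l ^+ 2 - (1 / 4) * l ^+ 3 + (1 / 16) * l ^+ 4)) r40p r4p e0p).
  - have a0 : (0:R) <= ((1 / 2) * l + (1 / 4) * l ^+ 2 - (1 / 8) * l ^+ 3) by nra.
    have a1 : (0:R) <= ((1 / 8) * l ^+ 3) by nra.
    have a1' : (0:R) <= (dR - 1) * ((1 / 8) * l ^+ 3) by apply: mulr_ge0 => //; try apply: exprn_ge0.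
    lra.
  - have b0 : (0:R) <= ((1 / 2) * l - (3 / 4) * l ^+ 2 + (3 / 8) * l ^+ 3 - (1 / 16) * l ^+ 4) by nra.
    have b1 : (0:R) <= ((1 / 4) * l ^+ 2 - (1 / 4) * l ^+ 3 + (1 / 16) * l ^+ 4) by nra.
    have b1' : (0:R) <= (dR - 1) * ((1 / 4) * l ^+ 2 - (1 / 4) * l ^+ 3 + (1 / 16) * l ^+ 4) by apply: mulr_ge0 => //; try apply: exprn_ge0.
    lra.
  - rewrite /r40 /rr1 /rr2 /rr3 /rr4 /rr5 /rr6 /rr7; by field.
have Fr15 : 0 <= rr1 l e dR - rr5 l e dR.
  apply: (@key _ (rr4 l e dR) e _ ((1 - (1 / 2) * l - (1 / 4) * l ^+ 2 + (1 / 8) * l ^+ 3) + (dR - 1) * ((1 / 24) * l ^+ 3)) ((1 - (3 / 2) * l + 1 * l ^+ 2 - (3 / 8) * l ^+ 3 + (1 / 16) * l ^+ 4) + (dR - 1) * ((1 / 2) * l - (1 / 2) * l ^+ 2 + (1 / 12) * l ^+ 3 + (1 / 48) * l ^+ 4)) r40p r4p e0p).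
  - have a0 : (0:R) <= (1 - (1 / 2) * l - (1 / 4) * l ^+ 2 + (1 / 8) * l ^+ 3) by nra.
    have a1 : (0:R) <= ((1 / 24) * l ^+ 3) by nra.
    have a1' : (0:R) <= (dR - 1) * ((1 / 24) * l ^+ 3) by apply: mulr_ge0 => //; try apply: exprn_ge0.
    lra.
  - have b0 : (0:R) <= (1 - (3 / 2) * l + 1 * l ^+ 2 - (3 / 8) * l ^+ 3 + (1 / 16) * l ^+ 4) by nra.
    have b1 : (0:R) <= ((1 / 2) * l - (1 / 2) * l ^+ 2 + (1 / 12) * l ^+ 3 + (1 / 48) * l ^+ 4) by nra.
    have b1' : (0:R) <= (dR - 1) * ((1 / 2) * l - (1 / 2) * l ^+ 2 + (1 / 12) * l ^+ 3 + (1 / 48) * l ^+ 4) by apply: mulr_ge0 => //; try apply: exprn_ge0.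
    lra.
  - rewrite /r40 /rr1 /rr2 /rr3 /rr4 /rr5 /rr6 /rr7; by field.
have Fr56 : 0 <= rr5 l e dR - rr6 l e dR.
  apply: (@key _ (rr4 l e dR) e _ (((1 / 2) * l - (1 / 2) * l ^+ 2 + (1 / 8) * l ^+ 3)) (((1 / 2) * l - (1 / 2) * l ^+ 2 + (1 / 8) * l ^+ 3) + (dR - 1) * ((1 / 4) * l ^+ 2 - (1 / 4) * l ^+ 3 + (1 / 16) * l ^+ 4)) r40p r4p e0p).
  - have a0 : (0:R) <= ((1 / 2) * l - (1 / 2) * l ^+ 2 + (1 / 8) * l ^+ 3) by nra.
    lra.
  - have b0 : (0:R) <= ((1 / 2) * l - (1 / 2) * l ^+ 2 + (1 / 8) * l ^+ 3) by nra.
    have b1 : (0:R) <= ((1 / 4) * l ^+ 2 - (1 / 4) * l ^+ 3 + (1 / 16) * l ^+ 4) by nra.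
    have b1' : (0:R) <= (dR - 1) * ((1 / 4) * l ^+ 2 - (1 / 4) * l ^+ 3 + (1 / 16) * l ^+ 4) by apply: mulr_ge0 => //; try apply: exprn_ge0.
    lra.
  - rewrite /r40 /rr1 /rr2 /rr3 /rr4 /rr5 /rr6 /rr7; by field.
have FT : 0 <= (rr4 l e dR + rr2 l e dR + rr5 l e dR + (dR - 2) * rr6 l e dR).
  apply: (@key _ (rr4 l e dR) e _ ((2 * l - (5 / 12) * l ^+ 2 - (1 / 24) * l ^+ 3) + (dR - 1) * (1 * l ^+ 2 - (1 / 12) * l ^+ 3) + (dR - 1) ^+ 2 * ((1 / 8) * l ^+ 3)) (((1 / 12) * l ^+ 2 - (1 / 24) * l ^+ 3)) r40p r4p e0p).
  - have a0 : (0:R) <= (2 * l - (5 / 12) * l ^+ 2 - (1 / 24) * l ^+ 3) by nra.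
    have a1 : (0:R) <= (1 * l ^+ 2 - (1 / 12) * l ^+ 3) by nra.
    have a1' : (0:R) <= (dR - 1) * (1 * l ^+ 2 - (1 / 12) * l ^+ 3) by apply: mulr_ge0 => //; try apply: exprn_ge0.
    have a2 : (0:R) <= ((1 / 8) * l ^+ 3) by nra.
    have a2' : (0:R) <= (dR - 1) ^+ 2 * ((1 / 8) * l ^+ 3) by apply: mulr_ge0 => //; try apply: exprn_ge0.
    lra.
  - have b0 : (0:R) <= ((1 / 12) * l ^+ 2 - (1 / 24) * l ^+ 3) by nra.
    lra.
  - rewrite /r40 /rr1 /rr2 /rr3 /rr4 /rr5 /rr6 /rr7; by field.
have FK1 : 0 <= (dR - 1) * ((rr4 l e dR + rr2 l e dR + rr5 l e dR + (dR - 2) * rr6 l e dR) + rr6 l e dR) + rr1 l e dR + rr3 l e dR.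
  apply: (@key _ (rr4 l e dR) e _ ((2) + (dR - 1) * (2 * l + (7 / 12) * l ^+ 2 - (1 / 8) * l ^+ 3) + (dR - 1) ^+ 2 * (1 * l ^+ 2 + (1 / 24) * l ^+ 3) + (dR - 1) ^+ 3 * ((1 / 8) * l ^+ 3)) ((2 - 2 * l + (1 / 2) * l ^+ 2) + (dR - 1) * (1 * l - (11 / 12) * l ^+ 2 + (1 / 6) * l ^+ 3 + (1 / 48) * l ^+ 4)) r40p r4p e0p).
  - have a0 : (0:R) <= (2) by nra.
    have a1 : (0:R) <= (2 * l + (7 / 12) * l ^+ 2 - (1 / 8) * l ^+ 3) by nra.
    have a1' : (0:R) <= (dR - 1) * (2 * l + (7 / 12) * l ^+ 2 - (1 / 8) * l ^+ 3) by apply: mulr_ge0 => //; try apply: exprn_ge0.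
    have a2 : (0:R) <= (1 * l ^+ 2 + (1 / 24) * l ^+ 3) by nra.
    have a2' : (0:R) <= (dR - 1) ^+ 2 * (1 * l ^+ 2 + (1 / 24) * l ^+ 3) by apply: mulr_ge0 => //; try apply: exprn_ge0.
    have a3 : (0:R) <= ((1 / 8) * l ^+ 3) by nra.
    have a3' : (0:R) <= (dR - 1) ^+ 3 * ((1 / 8) * l ^+ 3) by apply: mulr_ge0 => //; try apply: exprn_ge0.
    lra.
  - have b0 : (0:R) <= (2 - 2 * l + (1 / 2) * l ^+ 2) by nra.
    have b1 : (0:R) <= (1 * l - (11 / 12) * l ^+ 2 + (1 / 6) * l ^+ 3 + (1 / 48) * l ^+ 4) by nra.
    have b1' : (0:R) <= (dR - 1) * (1 * l - (11 / 12) * l ^+ 2 + (1 / 6) * l ^+ 3 + (1 / 48) * l ^+ 4) by apply: mulr_ge0 => //; try apply: exprn_ge0.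
    lra.
  - rewrite /r40 /rr1 /rr2 /rr3 /rr4 /rr5 /rr6 /rr7; by field.
have FK2 : 0 <= (dR - 1) * ((rr4 l e dR + rr2 l e dR + rr5 l e dR + (dR - 2) * rr6 l e dR) + dR * rr6 l e dR + rr4 l e dR + rr5 l e dR) + rr1 l e dR + rr3 l e dR.
  apply: (@key _ (rr4 l e dR) e _ ((2) + (dR - 1) * ((7 / 2) * l + (7 / 12) * l ^+ 2 - (1 / 4) * l ^+ 3) + (dR - 1) ^+ 2 * (2 * l ^+ 2 - (1 / 12) * l ^+ 3) + (dR - 1) ^+ 3 * ((1 / 4) * l ^+ 3)) ((2 - 2 * l + (1 / 2) * l ^+ 2) + (dR - 1) * ((3 / 2) * l - (5 / 3) * l ^+ 2 + (13 / 24) * l ^+ 3 - (1 / 24) * l ^+ 4)) r40p r4p e0p).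
  - have a0 : (0:R) <= (2) by nra.
    have a1 : (0:R) <= ((7 / 2) * l + (7 / 12) * l ^+ 2 - (1 / 4) * l ^+ 3) by nra.
    have a1' : (0:R) <= (dR - 1) * ((7 / 2) * l + (7 / 12) * l ^+ 2 - (1 / 4) * l ^+ 3) by apply: mulr_ge0 => //; try apply: exprn_ge0.
    have a2 : (0:R) <= (2 * l ^+ 2 - (1 / 12) * l ^+ 3) by nra.
    have a2' : (0:R) <= (dR - 1) ^+ 2 * (2 * l ^+ 2 - (1 / 12) * l ^+ 3) by apply: mulr_ge0 => //; try apply: exprn_ge0.
    have a3 : (0:R) <= ((1 / 4) * l ^+ 3) by nra.
    have a3' : (0:R) <= (dR - 1) ^+ 3 * ((1 / 4) * l ^+ 3) by apply: mulr_ge0 => //; try apply: exprn_ge0.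
    lra.
  - have b0 : (0:R) <= (2 - 2 * l + (1 / 2) * l ^+ 2) by nra.
    have b1 : (0:R) <= ((3 / 2) * l - (5 / 3) * l ^+ 2 + (13 / 24) * l ^+ 3 - (1 / 24) * l ^+ 4) by nra.
    have b1' : (0:R) <= (dR - 1) * ((3 / 2) * l - (5 / 3) * l ^+ 2 + (13 / 24) * l ^+ 3 - (1 / 24) * l ^+ 4) by apply: mulr_ge0 => //; try apply: exprn_ge0.
    lra.
  - rewrite /r40 /rr1 /rr2 /rr3 /rr4 /rr5 /rr6 /rr7; by field.
have FK3 : 0 <= rr4 l e dR + rr5 l e dR + rr2 l e dR - rr6 l e dR.
  apply: (@key _ (rr4 l e dR) e _ ((2 * l - (5 / 12) * l ^+ 2 - (1 / 24) * l ^+ 3) + (dR - 1) * ((1 / 4) * l ^+ 2 + (1 / 6) * l ^+ 3)) (((1 / 12) * l ^+ 2 - (1 / 24) * l ^+ 3) + (dR - 1) * ((1 / 4) * l ^+ 2 - (1 / 4) * l ^+ 3 + (1 / 16) * l ^+ 4)) r40p r4p e0p).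
  - have a0 : (0:R) <= (2 * l - (5 / 12) * l ^+ 2 - (1 / 24) * l ^+ 3) by nra.
    have a1 : (0:R) <= ((1 / 4) * l ^+ 2 + (1 / 6) * l ^+ 3) by nra.
    have a1' : (0:R) <= (dR - 1) * ((1 / 4) * l ^+ 2 + (1 / 6) * l ^+ 3) by apply: mulr_ge0 => //; try apply: exprn_ge0.
    lra.
  - have b0 : (0:R) <= ((1 / 12) * l ^+ 2 - (1 / 24) * l ^+ 3) by nra.
    have b1 : (0:R) <= ((1 / 4) * l ^+ 2 - (1 / 4) * l ^+ 3 + (1 / 16) * l ^+ 4) by nra.
    have b1' : (0:R) <= (dR - 1) * ((1 / 4) * l ^+ 2 - (1 / 4) * l ^+ 3 + (1 / 16) * l ^+ 4) by apply: mulr_ge0 => //; try apply: exprn_ge0.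
    lra.
  - rewrite /r40 /rr1 /rr2 /rr3 /rr4 /rr5 /rr6 /rr7; by field.
by repeat split; assumption.
Qed.
End S.


Arguments sc {R}. Arguments rr1 {R}. Arguments rr2 {R}. Arguments rr3 {R}. Arguments rr4 {R}.
Arguments rr5 {R}. Arguments rr6 {R}. Arguments rr7 {R}. Arguments facts_a {R}. Arguments sc_a {R}.
Arguments sc_b {R}. Arguments sc_c {R}. Arguments score_sc {R}.

Lemma nat3 (R : realFieldType) (n : nat) : (n%:R : R) = 0 \/ (n%:R : R) = 1 \/ 2 <= (n%:R : R).
Proof.
case: n => [|[|n]]; [by left | by right; left | right; right].
rewrite -addn2 natrD; have := ler0n R n; lra.
Qed.

Lemma sc_dzero (R : realFieldType) (b r1 r2 r3 r4 r5 r6 r7 : R) :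
  sc 0 0 b r1 r2 r3 r4 r5 r6 r7 = 0.
Proof. rewrite /sc; ring. Qed.

Lemma sc_x0 (R : realFieldType) (dR r1 r2 r3 r4 r5 r6 r7 : R) :
  sc dR 0 0 r1 r2 r3 r4 r5 r6 r7 = 0.
Proof.
rewrite /sc !(mul0r, add0r, subr0, mulr0, addr0) phi_0 //.
by rewrite !(mulr0, addr0).
Qed.

Lemma bcases (R : realFieldType) (b : bool) : 0 <= ((b : nat)%:R : R) /\ ((b : nat)%:R : R) <= 1.
Proof. by case: b => /=; split; rewrite ?ler01 ?lexx. Qed.

Theorem lemmaD2 (R : realFieldType) (d : nat) (lam eps : R) :
  0 < lam -> lam < 1 -> 0 <= eps -> eps < 1 ->
  [/\ (eps <= lam * (lam * (d%:R - 2) + 4) / (2 * (lam * (d%:R - 1) + 2)) ->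
         is_global_maximizer lam eps d d true),
      (eps = (lam * (d%:R - 1) + 2) / (2 * d%:R) ->
         is_global_maximizer lam eps d d true) &
      (lam / 2 + 3 / 2 * ((2 - lam) / (lam ^+ 2 * (d%:R - 1) + 3)) <= eps ->
         is_global_maximizer lam eps d 0 false)].
Proof.
move=> hl0 hl1 he0 he1.
case: d => [|d0].
  split => _; split => // d' b; rewrite leqn0 => /eqP ->; rewrite !score_sc !sc_dzero //.
set d := d0.+1.
have hd1 : (1 : R) <= d%:R by rewrite ler1n.
set dR := d%:R.
have XF : forall d' : nat, (d' <= d)%N ->
   [/\ 0 <= (d'%:R : R), (d'%:R : R) <= dR, ((d'%:R : R) = 0 \/ (d'%:R : R) = 1 \/ 2 <= (d'%:R : R)) &
     (dR - d'%:R = 0 \/ dR - d'%:R = 1 \/ 2 <= dR - d'%:R)].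
  move=> d' hd'; split; [exact: ler0n | by rewrite /dR ler_nat | exact: nat3 | by rewrite /dR -natrB //; exact: nat3].
split.
-
  move=> he.
  have Qp : 0 < 2 * (lam * (dR - 1) + 2).
    have : 0 <= lam * (dR - 1) by apply: mulr_ge0; lra.
    lra.
  rewrite ler_pdivlMr // in he.
  have r4p : 0 <= rr4 lam eps dR.
    have -> : rr4 lam eps dR = (lam * (lam * (dR - 2) + 4) - eps * (2 * (lam * (dR - 1) + 2))) / 4.
      by rewrite /rr4; field.
    apply: divr_ge0; lra.
  have [F1 [F2 [F3 [F4 [F5 [F6 [F7 [F8 [F9 F10]]]]]]]]] := facts_a lam eps dR hl0 hl1 he0 hd1 r4p.
  split => // d' b hd'.
  have [x0 xd xc tc] := XF d' hd'.
  have [b0 b1] := bcases R b.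
  rewrite !score_sc.
  apply: sc_a => //; lra.
-
  move=> he.
  have dpos : 0 < dR by lra.
  have E : eps * (2 * dR) = lam * (dR - 1) + 2.
    by rewrite he; field; rewrite /dR pnatr_eq0.
  have hd2 : 2 <= dR.
    case: (posnP d0) => [h0|h0].
      rewrite /dR /d h0 in E; exfalso; move: E; rewrite /=.
      have -> : ((0%N.+1)%:R : R) = 1 by [].
      move=> E; lra.
    by rewrite /dR /d -[2]/(2%:R) ler_nat ltnS.
  have [u eu] : exists u, eps = lam / 2 + u by exists (eps - lam / 2); ring.
  have hdu : dR * u = 1 - lam / 2 by move: E; rewrite eu; lra.
  have up : 0 < u.
    have : 0 < dR * u by lra.
    by rewrite pmulr_rgt0.
  have h1 : 1 - eps = (dR - 1) * u by rewrite eu; lra.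
  have h2 : lam / 2 - eps = - u by rewrite eu; lra.
  have R1 : rr1 lam eps dR = (dR - 1) * u * (1 - lam ^+ 2 / 3) by rewrite /rr1 h1 h2; field.
  have R2 : rr2 lam eps dR = - (u * (1 - lam ^+ 2 / 3)) by rewrite /rr2 h1 h2; field.
  have R3 : rr3 lam eps dR = (dR - 1) * u * (1 - lam / 2) by rewrite /rr3 h1 h2; field.
  have R4 : rr4 lam eps dR = - (u * (1 - lam / 2)) by rewrite /rr4 h1 h2; field.
  have R5 : rr5 lam eps dR = u * (dR - 2) * lam * (1 - lam / 2) / 2 by rewrite /rr5 h1 h2; field.
  have R6 : rr6 lam eps dR = - (lam * u * (1 - lam / 2)) by rewrite /rr6 h1 h2; field.
  have R7 : rr7 lam eps dR = 0 by rewrite /rr7 h1 h2; field.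
  split => // d' b hd'.
  have [x0 xd xc tc] := XF d' hd'.
  have [b0 b1] := bcases R b.
  rewrite !score_sc R1 R2 R3 R4 R5 R6 R7.
  apply: (sc_b dR (d'%:R) ((b:nat)%:R) lam u (1 - lam / 2) (1 - lam ^+ 2 / 3)) => //.
  by case: xc => [->|[->|h]]; [left|right|right]; lra.
-
  move=> he.
  have hD : 0 <= dR - 1 by lra.
  have Qp : 0 < lam ^+ 2 * (dR - 1) + 3.
    have : 0 <= lam ^+ 2 * (dR - 1) by apply: mulr_ge0 => //; apply: sqr_ge0.
    lra.
  have hpos : 0 < 3 / 2 * ((2 - lam) / (lam ^+ 2 * (dR - 1) + 3)).
    apply: mulr_gt0; first lra.
    apply: divr_gt0 => //; lra.
  set em := lam / 2 - eps.
  have hem : em < 0 by rewrite /em; lra.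
  have hQ : 3 / 2 * (2 - lam) <= - em * (lam ^+ 2 * (dR - 1) + 3).
    have hm := ler_wpM2r (ltW Qp) he.
    have Qn : lam ^+ 2 * (dR - 1) + 3 != 0 by rewrite lt0r_neq0.
    have id : (lam / 2 + 3 / 2 * ((2 - lam) / (lam ^+ 2 * (dR - 1) + 3))) * (lam ^+ 2 * (dR - 1) + 3)
       = lam / 2 * (lam ^+ 2 * (dR - 1) + 3) + 3 / 2 * (2 - lam) by field.
    rewrite id in hm; rewrite /em; lra.
  have Er1 : rr1 lam eps dR * 3 = 3 / 2 * (2 - lam) + em * (lam ^+ 2 * (dR - 1) + 3).
    by rewrite /rr1 /em; field.
  have F1 : rr1 lam eps dR <= 0 by lra.
  have sgn : forall a b : R, 0 <= a -> 0 <= b -> a * em * b <= 0.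
    move=> a b ha hb; rewrite -mulrA mulrC -mulrA mulr_le0_ge0 //; first lra.
    exact: mulr_ge0.
  have F3 : rr3 lam eps dR <= 0.
    have -> : rr3 lam eps dR = rr1 lam eps dR + (dR - 1) * em * (lam / 2 - lam ^+ 2 / 3).
      by rewrite /rr3 /rr1 /em; field.
    have := sgn (dR - 1) (lam / 2 - lam ^+ 2 / 3) hD; nra.
  have F7 : rr7 lam eps dR <= 0.
    have -> : rr7 lam eps dR = rr3 lam eps dR + (dR - 1) * em * (1 - lam / 2).
      by rewrite /rr3 /rr7 /em; field.
    have := sgn (dR - 1) (1 - lam / 2) hD; lra.
  have F4 : rr4 lam eps dR <= 0.
    have -> : rr4 lam eps dR = lam / 2 * rr7 lam eps dR + (1 - lam / 2) * em.
      by rewrite /rr4 /rr7 /em; field.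
    nra.
  have F5 : rr5 lam eps dR <= 0.
    have -> : rr5 lam eps dR = lam / 2 * (rr3 lam eps dR + (1 - lam / 2) * em).
      by rewrite /rr5 /rr3 /em; field.
    have h : (1 - lam / 2) * em <= 0 by rewrite mulr_ge0_le0 //; lra.
    rewrite mulr_ge0_le0 //; lra.
  have F6 : rr6 lam eps dR <= 0.
    have -> : rr6 lam eps dR = lam / 2 * rr4 lam eps dR + em * (lam / 2 - lam ^+ 2 / 4).
      by rewrite /rr6 /rr4 /em; field.
    have h : em * (lam / 2 - lam ^+ 2 / 4) <= 0 by rewrite mulr_le0_ge0 //; nra.
    have h' : lam / 2 * rr4 lam eps dR <= 0 by rewrite mulr_ge0_le0 //; lra.
    lra.
  have F2 : rr2 lam eps dR <= 0.
    have -> : rr2 lam eps dR = lam ^+ 2 / 3 * rr7 lam eps dR + em * (1 - lam ^+ 2 / 3).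
      by rewrite /rr2 /rr7 /em; field.
    have : 0 <= lam ^+ 2 / 3 by apply: divr_ge0 => //; apply: sqr_ge0.
    move=> hl2.
    have h : em * (1 - lam ^+ 2 / 3) <= 0 by rewrite mulr_le0_ge0 //; nra.
    have h' : lam ^+ 2 / 3 * rr7 lam eps dR <= 0 by rewrite mulr_ge0_le0.
    lra.
  split => // d' b hd'.
  have [x0 xd xc tc] := XF d' hd'.
  have [b0 b1] := bcases R b.
  rewrite !score_sc.
  rewrite [X in _ <= X](_ : _ = 0); last exact: sc_x0.
  apply: sc_c => //.
Qed.
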